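(* If $T\subseteq\mathbb{R}^n$ is an action set, then $\mathbf{W}(T)=\bigcap_{t\in T}\mathbf{W}(t)$ is a reaction set.
   Context: Single-commodity network pricing setting: $G=(\mathcal{V},\mathcal{A})$ directed graph, arc costs $c\ge0$, nonempty tolled arc set $\mathcal{A}_1\subsetneq\mathcal{A}$, $n=|\mathcal{A}_1|$, $N$ node–arc incidence matrix, single origin $o$ and destination $d$ connected by a path of arcs not in $\mathcal{A}_1$, $b_o=1$, $b_d=-1$, $b_i=0$ otherwise, $\mathcal{X}=\{x\in\mathbb{R}^{\mathcal{A}}: Nx=b,\ x\ge0\}$, $x_{\mathcal{A}_1}$ the restriction of $x$ to $\mathcal{A}_1$; tolls $t\in\mathbb{R}^n$ are extended by zeros to $\bar t\in\mathbb{R}^{\mathcal{A}}$. Let $f(t)=\min\{c^\top x+t^\top x_{\mathcal{A}_1}: x\in\mathcal{X}\}$ for $t\ge0$, $f(t)=-\infty$ otherwise, and $g(w)=\sup_{t\in\mathbb{R}^n}\{f(t)-t^\top w\}$. An action set is a set $T=\{t:(t,z)\in F\text{ for some }z\}$ where $F$ is a face of $\operatorname{epi}(-f)$ whose affine hull's direction space does not contain $(0,1)$ (non-vertical face); a reaction set is defined identically with $\operatorname{epi}(g)$ in place of $\operatorname{epi}(-f)$ (projection onto $w$-space of a non-vertical face of $\operatorname{epi}(g)$). For $t\ge0$, $\mathbf{W}(t)$ is the set of $w$ such that $(w,x)$ is optimal for some $x$ in the program $\min_{w,x}\{c^\top x+t^\top w: x_{\mathcal{A}_1}\le w,\ Nx=b,\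 w\ge0,\ x\ge0\}$. *)

(* Defs.v *)
From HB Require Import structures.
From mathcomp Require Import all_boot all_order all_algebra.
From mathcomp Require Import boolp classical_sets reals constructive_ereal ereal.
Set Implicit Arguments. Unset Strict Implicit. Unset Printing Implicit Defensive.
Import Order.TTheory GRing.Theory Num.Theory.
Local Open Scope ring_scope.
Local Open Scope classical_set_scope.

Section Geom.
Variables (R : realType) (m : nat).
Notation pt := ('cV[R]_m * R)%type.

Definition cvx_comb (l : R) (p q : pt) : pt :=
  (l *: p.1 + (1 - l) *: q.1, l * p.2 + (1 - l) * q.2).

Definition is_face (C F : set pt) : Prop :=
  [/\ F `<=` C,
      (forall p q l, F p -> F q -> 0 <= l <= 1 -> F (cvx_comb l p q)) &
      (forall p q l, C p -> C q -> 0 < l < 1 -> F (cvx_comb l p q) ->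
         F p /\ F q)].

(* the direction space of aff(F) = { sum lam_i p_i : p_i in F, sum lam_i = 0 };
   F is non-vertical iff (0,1) does not belong to it. *)
Definition nonvertical (F : set pt) : Prop :=
  ~ exists (k : nat) (p : 'I_k -> pt) (lam : 'I_k -> R),
      [/\ forall i, F (p i),
          \sum_i lam i = 0,
          \sum_i lam i *: (p i).1 = 0 &
          \sum_i lam i * (p i).2 = 1].

Definition proj_set (F : set pt) : set 'cV[R]_m := [set t | exists z, F (t, z)].

End Geom.

Section Pricing.
Variables (R : realType) (V A : finType) (tl hd : A -> V) (c : A -> R)
          (A1 : {set A}) (o d : V).

(* tolls / restricted flows live in R^n with n = #|A1|; coordinate i of
   R^n corresponds to the tolled arc enum_val i *)
Notation vec := 'cV[R]_#|A1|.

Definition incid (v : V) (a : A) : R := (tl a == v)%:R - (hd a == v)%:R.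
Definition bvec (v : V) : R := (v == o)%:R - (v == d)%:R.

Definition flowX : set (A -> R) :=
  [set x | (forall v, \sum_a incid v a * x a = bvec v) /\ (forall a, 0 <= x a)].

Definition restr (x : A -> R) : vec := \col_i x (enum_val i).

Definition dotv (t w : vec) : R := \sum_i t i 0 * w i 0.
Definition costc (x : A -> R) : R := \sum_a c a * x a.
Definition nonneg (t : vec) : Prop := forall i, 0 <= t i 0.

Definition fval (t : vec) : \bar R :=
  if `[< nonneg t >]
  then ereal_inf [set (costc x + dotv t (restr x))%:E | x in flowX]
  else -oo%E.

Definition gval (w : vec) : \bar R :=
  ereal_sup [set (fval t - (dotv t w)%:E)%E | t in [set: vec]].

Definition epi_negf : set (vec * R) := [set p | (- fval p.1 <= p.2%:E)%E].
Definition epi_g : set (vec * R) := [set p | (gval p.1 <= p.2%:E)%E].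

Definition action_set (T : set vec) : Prop :=
  exists F, [/\ is_face epi_negf F, F !=set0, nonvertical F & T = proj_set F].

Definition reaction_set (W : set vec) : Prop :=
  exists G, [/\ is_face epi_g G, G !=set0, nonvertical G & W = proj_set G].

Definition feasibleWX (w : vec) (x : A -> R) : Prop :=
  [/\ forall i, restr x i 0 <= w i 0, flowX x & nonneg w].
Definition objWX (t w : vec) (x : A -> R) : R := costc x + dotv t w.

Definition Wof (t : vec) : set vec :=
  [set w | exists x, feasibleWX w x /\
     (forall w' x', feasibleWX w' x' -> objWX t w x <= objWX t w' x')].

Definition WofSet (T : set vec) : set vec := [set w | forall t, T t -> Wof t w].

Definition untolled_rel : rel V :=
  fun u v => [exists a, [&& a \notin A1, tl a == u & hd a == v]].

End Pricing.

(* Main.v *)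
Require Import Defs.
From HB Require Import structures.
From mathcomp Require Import all_boot all_order all_algebra.
From mathcomp Require Import boolp classical_sets reals constructive_ereal ereal.
From mathcomp Require Import ring lra.
Import Order.TTheory GRing.Theory Num.Theory.
Local Open Scope ring_scope.

Section Farkas.
Variable R : realFieldType.
Variable J : finType.

Inductive deriv (I : finType) (a : I -> J -> R) (b : I -> R) : (J -> R) -> R -> Prop :=
| dI i : deriv I a b (a i) (b i)
| d0 : deriv I a b (fun _ => 0) 0
| dA al be al' be' : deriv I a b al be -> deriv I a b al' be' ->
    deriv I a b (fun j => al j + al' j) (be + be')
| dS l al be : 0 <= l -> deriv I a b al be -> deriv I a b (fun j => l * al j) (l * be)
| dW al be be' : deriv I a b al be -> be <= be' -> deriv I a b al be'
| dE al al' be : (forall j, al j = al' j) -> deriv I a b al be -> deriv I a b al' be.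
Arguments deriv {I}.
Arguments dI {I a b}. Arguments d0 {I a b}. Arguments dA {I a b}.
Arguments dS {I a b}. Arguments dW {I a b}. Arguments dE {I a b}.

Lemma deriv_mult (I : finType) a b al be : @deriv I a b al be ->
  exists y : I -> R, (forall i, 0 <= y i) /\ (forall j, al j = \sum_i y i * a i j)
    /\ \sum_i y i * b i <= be.
Proof.
elim=> {al be}.
- move=> i; exists (fun k => (k == i)%:R); split; first by move=> k; rewrite ler0n.
  have E (F : I -> R) : \sum_k (k == i)%:R * F k = F i.
    rewrite (bigD1 i) //= eqxx mul1r big1 ?addr0 // => k /negbTE ->.
    by rewrite mul0r.
  by split; [move=> j; rewrite E | rewrite E].
- exists (fun _ => 0); split=> //; split.
    by move=> j; rewrite big1 // => i _; rewrite mul0r.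
  by rewrite big1 // => i _; rewrite mul0r.
- move=> al be al' be' _ [y [y0 [ya yb]]] _ [y' [y0' [ya' yb']]].
  exists (fun i => y i + y' i); split; first by move=> i; rewrite addr_ge0.
  split.
    by move=> j; rewrite ya ya' -big_split /=; apply: eq_bigr => i _; rewrite mulrDl.
  under eq_bigr do rewrite mulrDl.
  by rewrite big_split /= lerD.
- move=> l al be l0 _ [y [y0 [ya yb]]].
  exists (fun i => l * y i); split; first by move=> i; rewrite mulr_ge0.
  split.
    by move=> j; rewrite ya mulr_sumr; apply: eq_bigr => i _; rewrite mulrA.
  under eq_bigr do rewrite -mulrA.
  by rewrite -mulr_sumr ler_wpM2l.
- move=> al be be' _ [y [y0 [ya yb]]] h.
  by exists y; split=> //; split=> //; apply: le_trans h.
- move=> al al' be e _ [y [y0 [ya yb]]].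
  by exists y; split=> //; split=> // j; rewrite -e.
Qed.

Lemma lower_bound_seq (U : seq R) : exists x, forall u, u \in U -> x <= u.
Proof.
elim: U => [|u U [x hx]]; first by exists 0.
exists (Num.min u x) => v; rewrite inE => /orP [/eqP ->|/hx h].
  by rewrite ge_min lexx.
by rewrite ge_min h orbT.
Qed.

Lemma between_seq (L U : seq R) :
  (forall l u, l \in L -> u \in U -> l <= u) ->
  exists x, (forall l, l \in L -> l <= x) /\ (forall u, u \in U -> x <= u).
Proof.
elim: L => [|l L IH] h.
  by have [x hx] := lower_bound_seq U; exists x.
have [|x [hx1 hx2]] := IH.
  by move=> l' u hl hu; apply: h => //; rewrite inE hl orbT.
exists (Num.max l x); split.
  move=> l'; rewrite inE => /orP [/eqP ->|/hx1 hl]; first by rewrite le_max lexx.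
  by rewrite le_max hl orbT.
move=> u hu; rewrite ge_max hx2 // andbT; apply: h => //; exact: mem_head.
Qed.

Lemma fm (n : nat) : forall (I : finType) (a : I -> J -> R) (b : I -> R) (D : {set J}),
  #|D| = n ->
  (forall al be, deriv a b al be -> (forall j, j \in D -> al j = 0) -> 0 <= be) ->
  exists x : J -> R, forall i, \sum_(j in D) a i j * x j <= b i.
Proof.
elim: n => [|n IH] I a b D hD h.
  move/cards0_eq: hD => hD0; exists (fun _ => 0) => i.
  rewrite hD0 big_set0; apply: (h _ _ (dI i)) => j; by rewrite hD0 inE.
have [j0 Hj0] : exists j0, j0 \in D.
  by apply/set0Pn; apply/negP => /eqP E; rewrite E cards0 in hD.
have hD' : #|D :\ j0| = n by move: hD; rewrite (cardsD1 j0) Hj0 add1n => -[].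
pose a' (k : (I + I * I)%type) : J -> R :=
  match k with
  | inl i => if a i j0 == 0 then a i else (fun _ => 0)
  | inr (i, k) => if (0 < a i j0) && (a k j0 < 0) then
       (fun j => (- a k j0) * a i j + a i j0 * a k j) else (fun _ => 0)
  end.
pose b' (k : (I + I * I)%type) : R :=
  match k with
  | inl i => if a i j0 == 0 then b i else 0
  | inr (i, k) => if (0 < a i j0) && (a k j0 < 0) then
       (- a k j0) * b i + a i j0 * b k else 0
  end.
have transfer al be : deriv a' b' al be -> deriv a b al be /\ al j0 = 0.
  elim=> {al be}.
  - case=> [i|[i k]] /=.
      case: eqP => [e|_]; first by split=> //; exact: dI.
      by split=> //; exact: d0.
    case: ifP => [/andP [hi hk]|_]; last by split=> //; exact: d0.
    split; last by ring.
    apply: dA; apply: dS; try exact: dI.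
      by rewrite oppr_ge0 ltW.
    by rewrite ltW.
  - by split=> //; exact: d0.
  - move=> al be al' be' _ [d1 e1] _ [d2 e2]; split; first exact: dA.
    by rewrite e1 e2 addr0.
  - move=> l al be l0 _ [d1 e1]; split; first exact: dS.
    by rewrite e1 mulr0.
  - move=> al be be' _ [d1 e1] hb; split=> //; exact: dW hb.
  - move=> al al' be e _ [d1 e1]; split; first exact: dE d1.
    by rewrite -e.
have [x' hx'] : exists x' : J -> R, forall k, \sum_(j in D :\ j0) a' k j * x' j <= b' k.
  apply: (IH _ a' b' (D :\ j0) hD') => al be hd hz.
  have [d1 e1] := transfer al be hd.
  apply: (h _ _ d1) => j hj; case: (eqVneq j j0) => [->|ne] //.
  by apply: hz; rewrite !inE ne hj.
pose r i := b i - \sum_(j in D :\ j0) a i j * x' j.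
have key i k : 0 < a i j0 -> a k j0 < 0 -> r k / a k j0 <= r i / a i j0.
  move=> hi hk; have := hx' (inr (i, k)); rewrite /= hi hk /=.
  have -> : \sum_(j in D :\ j0) ((- a k j0) * a i j + a i j0 * a k j) * x' j =
     (- a k j0) * \sum_(j in D :\ j0) a i j * x' j + a i j0 * \sum_(j in D :\ j0) a k j * x' j.
    rewrite !mulr_sumr -big_split; apply: eq_bigr => j _ /=; ring.
  move=> hh.
  have k0 : 0 <= (- a k j0) * r i + a i j0 * r k by rewrite /r; lra.
  set P := a i j0 in hi k0 *; set M := a k j0 in hk k0 *.
  set u := r i / P; set l := r k / M.
  have eu : r i = u * P by rewrite /u divfK // gt_eqF.
  have el : r k = l * M by rewrite /l divfK // lt_eqF.
  have H2 : (P * - M) * (u - l) = - M * r i + P * r k by rewrite eu el; ring.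
  by move: k0; rewrite -H2 pmulr_rge0 ?mulr_gt0 ?oppr_gt0 // subr_ge0.
set L := [seq r i / a i j0 | i <- enum I & a i j0 < 0].
set U := [seq r i / a i j0 | i <- enum I & 0 < a i j0].
have hLU : forall l u, l \in L -> u \in U -> l <= u.
  move=> l u /mapP [k]; rewrite mem_filter => /andP [hk _] -> /mapP [i].
  by rewrite mem_filter => /andP [hi _] ->; apply: key.
have [x0 [hx1 hx2]] := between_seq L U hLU.
exists (fun j => if j == j0 then x0 else x' j) => i.
rewrite (bigD1 j0) //= eqxx.
have -> : \sum_(j in D | j != j0) a i j * (if j == j0 then x0 else x' j) =
          \sum_(j in D :\ j0) a i j * x' j.
  apply: eq_big => [j|j /andP [_ hj]]; first by rewrite !inE andbC.
  by rewrite (negbTE hj).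
have er : \sum_(j in D :\ j0) a i j * x' j = b i - r i by rewrite /r; lra.
rewrite er.
case: (ltgtP (a i j0) 0) => hs.
- have h1 : r i / a i j0 <= x0 by apply: hx1; apply: map_f; rewrite mem_filter hs mem_enum.
  have : a i j0 * x0 <= a i j0 * (r i / a i j0) by rewrite ler_nM2l.
  move=> hh; rewrite [X in _ <= X]mulrC divfK ?lt_eqF // in hh; lra.
- have h1 : x0 <= r i / a i j0 by apply: hx2; apply: map_f; rewrite mem_filter hs mem_enum.
  have : a i j0 * x0 <= a i j0 * (r i / a i j0) by rewrite ler_pM2l.
  move=> hh; rewrite [X in _ <= X]mulrC divfK ?gt_eqF // in hh; lra.
- have := hx' (inl i); rewrite /= hs eqxx.
  rewrite -/(r i) in er * => hh.
  rewrite mul0r add0r; move: hh; rewrite er; lra.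
Qed.

Lemma farkas_cert (I : finType) (a : I -> J -> R) (b : I -> R) :
  ~ (exists x : J -> R, forall i, \sum_j a i j * x j <= b i) ->
  exists y : I -> R, [/\ forall i, 0 <= y i,
    forall x : J -> R, \sum_i y i * (\sum_j a i j * x j) = 0 &
    \sum_i y i * b i < 0].
Proof.
move=> nf; apply: contrapT => ny; apply: nf.
have hyp : forall al be, deriv a b al be -> (forall j, j \in [set: J] -> al j = 0) -> 0 <= be.
  move=> al be hd hz; have [y [y0 [ya yb]]] := deriv_mult _ _ _ _ _ hd.
  rewrite leNgt; apply/negP => hbe; apply: ny; exists y; split=> //.
    move=> x; rewrite (eq_bigr (fun i => \sum_j y i * a i j * x j)); last first.
      by move=> i _; rewrite mulr_sumr; apply: eq_bigr => j _; rewrite mulrA.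
    rewrite exchange_big /= big1 // => j _.
    by rewrite -mulr_suml -ya hz ?inE // mul0r.
  exact: le_lt_trans yb hbe.
have [x hx] := @fm #|[set: J]| I a b [set: J] (erefl _) hyp.
exists x => i; have := hx i.
by rewrite (eq_bigl (fun j => true)) // => j; rewrite inE.
Qed.
End Farkas.

Local Open Scope classical_set_scope.

Section Flow.
Variables (R : realType) (V A : finType) (tl hd : A -> V) (c : A -> R)
          (A1 : {set A}) (o d : V).
Notation n := #|A1|.
Notation vec := 'cV[R]_#|A1|.
Notation X := (@flowX R V A tl hd o d).
Notation ev := (@enum_val A (mem A1)).

Lemma sum_delta (x : A -> R) (a : A) : \sum_j (j == a)%:R * x j = x a.
Proof.
rewrite (bigD1 a) //= eqxx mul1r big1 ?addr0 // => j /negbTE ->; by rewrite mul0r.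
Qed.

Lemma sum_delta' (x : A -> R) (a : A) : \sum_j (a == j)%:R * x j = x a.
Proof.
rewrite -(sum_delta x a); apply: eq_bigr => j _; by rewrite eq_sym.
Qed.

Lemma sum_unit (F : unit -> R) : \sum_(i : unit) F i = F tt.
Proof. by rewrite (big_pred1 tt) //; case. Qed.

Lemma restrE (x : A -> R) i : restr A1 x i 0 = x (ev i).
Proof. by rewrite /restr mxE. Qed.

Lemma flow_cert (cap : pred 'I_#|A1|) (u : vec) (q : A -> R) (z : R) :
  ~ (exists x, X x /\ (forall i, cap i -> x (ev i) <= u i 0) /\ \sum_a q a * x a <= z) ->
  exists (mu : V -> R) (s : vec) (lam : R),
   [/\ nonneg s, forall i, ~~ cap i -> s i 0 = 0, 0 <= lam,
       forall x, X x -> 0 <= \sum_v mu v * bvec R o d v + dotv s (restr A1 x) + lam * \sum_a q a * x a &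
       \sum_v mu v * bvec R o d v + dotv s u + lam * z < 0].
Proof.
move=> nf.
pose I := ((((A + V) + V) + 'I_#|A1|) + unit)%type.
pose arow (k : I) : A -> R := match k with
 | inl (inl (inl (inl a))) => fun j => - (j == a)%:R
 | inl (inl (inl (inr v))) => fun j => incid R tl hd v j
 | inl (inl (inr v)) => fun j => - incid R tl hd v j
 | inl (inr i) => fun j => if cap i then (ev i == j)%:R else 0
 | inr _ => q end.
pose brow (k : I) : R := match k with
 | inl (inl (inl (inl a))) => 0
 | inl (inl (inl (inr v))) => bvec R o d v
 | inl (inl (inr v)) => - bvec R o d v
 | inl (inr i) => if cap i then u i 0 else 0
 | inr _ => z end.
have rowx (x : A -> R) (k : I) : \sum_j arow k j * x j = match k with
 | inl (inl (inl (inl a))) => - x a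
 | inl (inl (inl (inr v))) => \sum_j incid R tl hd v j * x j
 | inl (inl (inr v)) => - \sum_j incid R tl hd v j * x j
 | inl (inr i) => if cap i then x (ev i) else 0
 | inr _ => \sum_j q j * x j end.
  case: k => [[[[a|v]|v]|i]|[]] /=.
  - by rewrite -sum_delta -sumrN; apply: eq_bigr => j _; rewrite mulNr.
  - by [].
  - by rewrite -sumrN; apply: eq_bigr => j _; rewrite mulNr.
  - case: (cap i); first exact: sum_delta'.
    by rewrite big1 // => j _; rewrite mul0r.
  - by [].
have [y [y0 yx yb]] : exists y : I -> R, [/\ forall i, 0 <= y i,
    forall x : A -> R, \sum_i y i * (\sum_j arow i j * x j) = 0 &
    \sum_i y i * brow i < 0].
  apply: farkas_cert => -[x hx]; apply: nf; exists x.
  split; [split|split].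
  - move=> v; apply/eqP; rewrite eq_le.
    have := hx (inl (inl (inl (inr v)))); have := hx (inl (inl (inr v))).
    rewrite !rowx /= => h1 h2; rewrite h2 /=; lra.
  - by move=> a; have := hx (inl (inl (inl (inl a)))); rewrite rowx /=; lra.
  - by move=> i ci; have := hx (inl (inr i)); rewrite rowx /= ci.
  - by have := hx (inr tt); rewrite rowx.
pose mu v := y (inl (inl (inl (inr v)))) - y (inl (inl (inr v))).
pose s : vec := \col_i (if cap i then y (inl (inr i)) else 0).
exists mu, s, (y (inr tt)); split.
- by move=> i; rewrite mxE; case: (cap i).
- by move=> i /negbTE ci; rewrite mxE ci.
- exact: y0.
- move=> x [hc hn].
  have := yx x; under eq_bigr do rewrite rowx.
  rewrite !big_sumType sum_unit /=.
  have e5 : \sum_v y (inl (inl (inl (inr v)))) * \sum_j incid R tl hd v j * x j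
     = \sum_v y (inl (inl (inl (inr v)))) * bvec R o d v.
    by apply: eq_bigr => v _; rewrite hc.
  have e6 : \sum_v y (inl (inl (inr v))) * - \sum_j incid R tl hd v j * x j
     = \sum_v y (inl (inl (inr v))) * - bvec R o d v.
    by apply: eq_bigr => v _; rewrite hc.
  rewrite e5 e6.
  have e1 : \sum_v mu v * bvec R o d v = \sum_v y (inl (inl (inl (inr v)))) * bvec R o d v
     + \sum_v y (inl (inl (inr v))) * - bvec R o d v.
    by rewrite -big_split; apply: eq_bigr => v _ /=; rewrite /mu; ring.
  have e2 : dotv s (restr A1 x) = \sum_i y (inl (inr i)) * (if cap i then x (ev i) else 0).
    by apply: eq_bigr => i _; rewrite mxE restrE; case: (cap i); rewrite ?mul0r ?mulr0.
  have e3 : 0 <= \sum_a y (inl (inl (inl (inl a)))) * x a.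
    by apply: sumr_ge0 => a _; rewrite mulr_ge0.
  have e4 : \sum_a y (inl (inl (inl (inl a)))) * - x a = - \sum_a y (inl (inl (inl (inl a)))) * x a.
    by rewrite -sumrN; apply: eq_bigr => a _; rewrite mulrN.
  rewrite e1 e2 e4; lra.
- have := yb; rewrite !big_sumType sum_unit /=.
  have e1 : \sum_v mu v * bvec R o d v = \sum_v y (inl (inl (inl (inr v)))) * bvec R o d v
     + \sum_v y (inl (inl (inr v))) * - bvec R o d v.
    by rewrite -big_split; apply: eq_bigr => v _ /=; rewrite /mu; ring.
  have e2 : dotv s u = \sum_i y (inl (inr i)) * (if cap i then u i 0 else 0).
    by apply: eq_bigr => i _; rewrite mxE; case: (cap i); rewrite ?mul0r ?mulr0.
  rewrite big1 ?add0r; last by move=> a _; rewrite mulr0.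
  rewrite e1 e2; lra.
Qed.

Notation f := (@fval R V A tl hd c A1 o d).
Notation g := (@gval R V A tl hd c A1 o d).
Definition ell (x : A -> R) (t : vec) := costc c x + dotv t (restr A1 x).

Lemma fF1 t x : nonneg t -> X x -> (f t <= (ell x t)%:E)%E.
Proof. by move=> nt hx; rewrite /fval (asboolT nt); apply: ereal_inf_lbound; exists x. Qed.

Lemma fF2 t r : nonneg t -> (forall x, X x -> r <= ell x t) -> (r%:E <= f t)%E.
Proof.
move=> nt h; rewrite /fval (asboolT nt); apply: le_ereal_inf_tmp => _ [x hx <-].
by rewrite lee_fin h.
Qed.

Lemma fF3 t : ~ nonneg t -> f t = -oo%E.
Proof. by move=> nt; rewrite /fval asboolF. Qed.

Lemma gG1 t w : (f t - (dotv t w)%:E <= g w)%E.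
Proof. by apply: ereal_sup_ubound; exists t. Qed.

Lemma gG2 w z : (forall t, (f t - (dotv t w)%:E <= z)%E) -> (g w <= z)%E.
Proof. by move=> h; apply: ge_ereal_sup => _ [t _ <-]. Qed.

Lemma dotv_linl a b (s t w : vec) : dotv (a *: s + b *: t) w = a * dotv s w + b * dotv t w.
Proof.
rewrite /dotv !mulr_sumr -big_split; apply: eq_bigr => i _ /=; rewrite !mxE; ring.
Qed.

Lemma dotv_linr a b (t w1 w2 : vec) : dotv t (a *: w1 + b *: w2) = a * dotv t w1 + b * dotv t w2.
Proof.
rewrite /dotv !mulr_sumr -big_split; apply: eq_bigr => i _ /=; rewrite !mxE; ring.
Qed.

Lemma dotv_sumr k (lam : 'I_k -> R) (p : 'I_k -> vec) (t : vec) :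
  dotv t (\sum_i lam i *: p i) = \sum_i lam i * dotv t (p i).
Proof.
rewrite /dotv; under eq_bigr do rewrite summxE mulr_sumr.
rewrite exchange_big /=; apply: eq_bigr => j _; rewrite mulr_sumr.
by apply: eq_bigr => i _; rewrite mxE; ring.
Qed.

Lemma dotv0r (t : vec) : dotv t 0 = 0.
Proof. by rewrite /dotv big1 // => i _; rewrite mxE mulr0. Qed.

Lemma dotv0l (w : vec) : dotv 0 w = 0.
Proof. by rewrite /dotv big1 // => i _; rewrite mxE mul0r. Qed.

Lemma dotv_le (t w w' : vec) : nonneg t -> (forall i, w i 0 <= w' i 0) -> dotv t w <= dotv t w'.
Proof. by move=> nt h; apply: ler_sum => i _; apply: ler_wpM2l. Qed.

Lemma dotv_ge0 (t w : vec) : nonneg t -> nonneg w -> 0 <= dotv t w.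
Proof. by move=> nt nw; apply: sumr_ge0 => i _; apply: mulr_ge0. Qed.

Lemma restr_nonneg (x : A -> R) : X x -> nonneg (restr A1 x).
Proof. by move=> [_ hn] i; rewrite restrE. Qed.

Lemma ell_comb x y al be t :
  ell (fun a => al * x a + be * y a) t = al * ell x t + be * ell y t.
Proof.
rewrite /ell /costc /dotv.
have e1 : \sum_a c a * (al * x a + be * y a) = al * \sum_a c a * x a + be * \sum_a c a * y a.
  by rewrite !mulr_sumr -big_split; apply: eq_bigr => a _ /=; ring.
have e2 : \sum_i t i 0 * restr A1 (fun a => al * x a + be * y a) i 0 =
   al * \sum_i t i 0 * restr A1 x i 0 + be * \sum_i t i 0 * restr A1 y i 0.
  by rewrite !mulr_sumr -big_split; apply: eq_bigr => i _ /=; rewrite !restrE; ring.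
rewrite e1 e2; ring.
Qed.

Lemma ell_linl x a b s t : ell x (a *: s + b *: t) = costc c x + a * dotv s (restr A1 x) + b * dotv t (restr A1 x).
Proof. by rewrite /ell dotv_linl addrA. Qed.

Lemma flow_aff x y al be : X x -> X y -> al + be = 1 -> (forall a, 0 <= al * x a + be * y a) ->
  X (fun a => al * x a + be * y a).
Proof.
move=> [hx _] [hy _] e hn; split=> // v.
under eq_bigr do rewrite mulrDr !mulrA [_ * al]mulrC [_ * be]mulrC -!mulrA.
rewrite big_split /= -!mulr_sumr hx hy -mulrDl e mul1r //.
Qed.

Hypothesis c0 : forall a, 0 <= c a.
Variable F : set (vec * R).
Hypothesis Fface : is_face (epi_negf tl hd c o d) F.
Hypothesis Fnv : nonvertical F.

Lemma sum2 (G : 'I_2 -> R) : \sum_i G i = G ord0 + G (lift ord0 ord0).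
Proof. by rewrite !big_ord_recl big_ord0 addr0. Qed.

Lemma sum2v (G : 'I_2 -> vec) : \sum_i G i = G ord0 + G (lift ord0 ord0).
Proof. by rewrite !big_ord_recl big_ord0 addr0. Qed.

Lemma vert t z del : 0 < del -> F (t, z) -> (- f t <= (z - del)%:E)%E -> False.
Proof.
move=> d0 Fp ep; case: Fface => sub conv ext.
have ep1 : epi_negf tl hd c o d (t, z + del).
  rewrite /epi_negf /=; apply: (le_trans ep); rewrite lee_fin; lra.
have ep2 : epi_negf tl hd c o d (t, z - del) by [].
have hc : cvx_comb (1/2) (t, z + del) (t, z - del) = (t, z).
  rewrite /cvx_comb /= -scalerDl.
  have -> : 1 / 2 + (1 - 1 / 2) = 1 :> R by ring.
  by rewrite scale1r; congr (_, _); field.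
have hl : 0 < (1 / 2 : R) < 1 by apply/andP; split; lra.
have Fm : F (cvx_comb (1/2) (t, z + del) (t, z - del)) by rewrite hc.
have [F1 F2] := ext _ _ (1/2) ep1 ep2 hl Fm.
apply: Fnv; exists 2, (fun i : 'I_2 => if val i == 0%N then (t, z + del) else (t, z - del)),
  (fun i : 'I_2 => if val i == 0%N then 1 / (2 * del) else - (1 / (2 * del))).
split.
- by move=> i; case: ifP.
- by rewrite sum2 /=; ring.
- by rewrite sum2v /= scaleNr addrN.
- rewrite sum2 /=; field; lra.
Qed.

Lemma onF t z : F (t, z) -> nonneg t /\ f t = (- z)%:E.
Proof.
move=> Fp; case: Fface => sub _ _.
have ep : (- f t <= z%:E)%E := sub _ Fp.
have nt : nonneg t.
  by apply: contrapT => nt; move: ep; rewrite fF3.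
split=> //.
case E: (f t) => [r| |].
- move: ep; rewrite E -EFinN lee_fin => ep.
  have : ~ (- r < z).
    move=> lt; apply: (@vert t z (z + r)) Fp _; first lra.
    by rewrite E -EFinN lee_fin; lra.
  by move=> h; congr (_%:E); lra.
- exfalso; apply: (@vert t z 1) Fp _; first lra.
  by rewrite E /= leNye.
- by move: ep; rewrite E /= leye_eq.
Qed.

Lemma Tinfo t : proj_set F t -> exists phi, [/\ f t = phi%:E, F (t, - phi) & nonneg t].
Proof.
move=> [z Fz]; have [nt ft] := onF _ _ Fz; exists (- z); split=> //; by rewrite opprK.
Qed.

Lemma Tmid s t ps pt : F (s, - ps) -> F (t, - pt) -> f s = ps%:E -> f t = pt%:E ->
  F ((1/2) *: s + (1 - 1/2) *: t, - ((ps + pt) / 2)) /\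
  f ((1/2) *: s + (1 - 1/2) *: t) = ((ps + pt) / 2)%:E.
Proof.
move=> Fs Ft fs ft; case: Fface => _ conv _.
have hl : 0 <= (1 / 2 : R) <= 1 by apply/andP; split; lra.
have := conv _ _ _ Fs Ft hl; rewrite /cvx_comb /=.
have -> : 1 / 2 * - ps + (1 - 1 / 2) * - pt = - ((ps + pt) / 2) by field.
move=> Fm; split=> //; have [_ ->] := onF _ _ Fm; by rewrite opprK.
Qed.

Definition qv (t : vec) (a : A) := c a + \sum_i t i 0 * (ev i == a)%:R.

Lemma qsum t x : \sum_a qv t a * x a = ell x t.
Proof.
rewrite /ell /costc /qv; under eq_bigr do rewrite mulrDl.
rewrite big_split /=; congr (_ + _).
under eq_bigr do rewrite mulr_suml.
rewrite exchange_big /=; apply: eq_bigr => i _.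
rewrite restrE -(sum_delta' x (ev i)) mulr_sumr; apply: eq_bigr => a _; ring.
Qed.

Lemma Xne t phi : nonneg t -> f t = phi%:E -> exists x, X x.
Proof.
move=> nt ft; apply: contrapT => nx.
have : ((phi + 1)%:E <= f t)%E.
  by apply: fF2 => // x hx; exfalso; apply: nx; exists x.
rewrite ft lee_fin; lra.
Qed.

Lemma attain t phi : nonneg t -> f t = phi%:E -> exists x, X x /\ ell x t <= phi.
Proof.
move=> nt ft; apply: contrapT => nO.
have nf : ~ (exists x, X x /\ (forall i, pred0 i -> x (ev i) <= (0 : vec) i 0) /\
    \sum_a qv t a * x a <= phi).
  by move=> [x [hx [_ hq]]]; apply: nO; exists x; split=> //; rewrite -qsum.
have [mu [s [lam [sn s0 l0 hX hb]]]] := flow_cert _ _ _ _ nf.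
have sz : s = 0 by apply/matrixP => i j; rewrite (ord1 j) s0 ?mxE.
rewrite sz dotv0r in hb.
have [x0 hx0] := Xne _ _ nt ft.
case: (eqVneq lam 0) => [l00 | lnz].
  have := hX x0 hx0; rewrite sz dotv0l l00 mul0r; rewrite l00 mul0r in hb; lra.
have lp : 0 < lam by rewrite lt_neqAle eq_sym lnz l0.
have : (((- \sum_v mu v * bvec R o d v) / lam)%:E <= f t)%E.
  apply: fF2 => // x hx; have := hX x hx; rewrite sz dotv0l qsum => h.
  rewrite ler_pdivrMr // mulrC; lra.
rewrite ft lee_fin ler_pdivrMr // => h.
have : lam * phi = phi * lam by rewrite mulrC.
lra.
Qed.

Lemma Wof_intro (t : vec) phi (w : vec) (x : A -> R) : nonneg t -> f t = phi%:E -> X x ->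
  (forall i, restr A1 x i 0 <= w i 0) -> nonneg w -> costc c x + dotv t w <= phi ->
  Wof tl hd c o d t w.
Proof.
move=> nt ft hx hr nw hc; exists x; split; first by split.
move=> w' x' [hr' hx' nw']; rewrite /objWX.
have := fF1 _ _ nt hx'; rewrite ft lee_fin /ell => h1.
have := dotv_le _ _ _ nt hr'; lra.
Qed.

Lemma Wof_elim (t : vec) phi (w : vec) : nonneg t -> f t = phi%:E -> Wof tl hd c o d t w ->
  exists x, [/\ X x, nonneg w, forall i, restr A1 x i 0 <= w i 0 & costc c x + dotv t w <= phi].
Proof.
move=> nt ft [x [[hr hx nw] opt]]; exists x; split=> //.
have : ((costc c x + dotv t w)%:E <= f t)%E.
  apply: fF2 => // x' hx'.
  have hf : feasibleWX tl hd o d (restr A1 x') x' by split=> //; exact: restr_nonneg.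
  by have := opt _ _ hf; rewrite /objWX /ell.
by rewrite ft lee_fin.
Qed.

Lemma dotvZl k (s w : vec) : dotv (k *: s) w = k * dotv s w.
Proof. by rewrite -[k *: s]addr0 -(scale0r s) dotv_linl mul0r addr0. Qed.

Lemma dotvDl (s t w : vec) : dotv (s + t) w = dotv s w + dotv t w.
Proof. by rewrite -[s]scale1r -[t]scale1r dotv_linl !mul1r !scale1r. Qed.

Lemma dotv_e i (w : vec) : dotv (\col_j (j == i)%:R) w = w i 0.
Proof.
rewrite /dotv (bigD1 i) //= mxE eqxx mul1r big1 ?addr0 // => j /negbTE hj.
by rewrite mxE hj mul0r.
Qed.

Lemma costc_ge0 (x : A -> R) : X x -> 0 <= costc c x.
Proof. by move=> [_ hn]; apply: sumr_ge0 => a _; apply: mulr_ge0. Qed.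

Lemma H1 (t : vec) phi (w : vec) z : nonneg t -> f t = phi%:E ->
  (forall t', (f t' - (dotv t' w)%:E <= z%:E)%E) -> z + dotv t w <= phi ->
  Wof tl hd c o d t w.
Proof.
move=> nt ft hg hz.
have nw : nonneg w.
  move=> i; pose e : vec := \col_j (j == i)%:R.
  have nt' : nonneg (t + e) by move=> j; rewrite !mxE; apply: addr_ge0; [exact: nt | exact: ler0n].
  have hl : (phi%:E <= f (t + e))%E.
    apply: fF2 => // x hx; have := fF1 _ _ nt hx; rewrite ft lee_fin /ell => h.
    rewrite dotvDl dotv_e restrE; case: hx => _ hn; have := hn (ev i); lra.
  have := leeB hl (lexx (dotv (t + e) w)%:E).
  move=> /le_trans /(_ (hg (t + e))); rewrite -EFinB lee_fin dotvDl dotv_e; lra.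
apply: contrapT => nW.
have nf : ~ (exists x, X x /\ (forall i, predT i -> x (ev i) <= w i 0) /\ \sum_a c a * x a <= z).
  move=> [x [hx [hc hq]]]; apply: nW; apply: (@Wof_intro t phi w x) => //.
    by move=> i; rewrite restrE; apply: hc.
  rewrite /costc; lra.
have [mu [s [lam [sn _ l0 hX hb]]]] := flow_cert _ _ _ _ nf.
set B := \sum_v mu v * bvec R o d v in hX hb.
set D := - (B + dotv s w).
have hDz : lam * z < D by rewrite /D; lra.
have z1 : 0 < `|z| + 1 by rewrite ltr_pwDr.
set eps := (D - lam * z) / (`|z| + 1).
have e0 : 0 < eps by rewrite divr_gt0 // subr_gt0.
have ee : eps * (`|z| + 1) = D - lam * z by rewrite /eps divfK // gt_eqF.
set kap := lam + eps.
have k0 : 0 < kap by rewrite /kap; lra.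
have nt' : nonneg (kap^-1 *: s) by move=> i; rewrite mxE mulr_ge0 // invr_ge0 ltW.
have hl : (((- B) / kap)%:E <= f (kap^-1 *: s))%E.
  apply: fF2 => // x hx; have := hX x hx; have cx := costc_ge0 _ hx.
  rewrite /ell dotvZl ler_pdivrMr //.
  have -> : (costc c x + kap^-1 * dotv s (restr A1 x)) * kap = costc c x * kap + dotv s (restr A1 x).
    by field; rewrite gt_eqF.
  have : lam * costc c x <= kap * costc c x by apply: ler_wpM2r => //; rewrite /kap; lra.
  rewrite /costc mulrC; lra.
have := leeB hl (lexx (dotv (kap^-1 *: s) w)%:E).
move=> /le_trans /(_ (hg (kap^-1 *: s))); rewrite -EFinB lee_fin dotvZl.
have -> : (- B) / kap - kap^-1 * dotv s w = (D) / kap by rewrite /D; field; rewrite gt_eqF.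
rewrite ler_pdivrMr // => hD.
have : eps * z <= eps * `|z| by apply: ler_wpM2l; [exact: ltW | exact: ler_norm].
have : kap * z = lam * z + eps * z by rewrite /kap mulrDl.
rewrite mulrC in hD; lra.
Qed.

Definition Op (t : vec) (x : A -> R) := X x /\ ell x t <= fine (f t).

Lemma Op_mid t x y : Op t x -> Op t y -> Op t (fun a => 1/2 * x a + 1/2 * y a).
Proof.
move=> [hx lx] [hy ly]; split.
  apply: flow_aff => //; first by field.
  by move=> a; case: hx => _ h1; case: hy => _ h2; apply: addr_ge0; apply: mulr_ge0 => //.
rewrite ell_comb; lra.
Qed.

Lemma relint t : nonneg t -> f t = (fine (f t))%:E ->
  exists r, Op t r /\ forall x a, Op t x -> 0 < x a -> 0 < r a.
Proof.
move=> nt ft.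
suff : forall s : seq A, exists r, Op t r /\ forall a, a \in s -> forall x, Op t x -> 0 < x a -> 0 < r a.
  move=> /(_ (enum A)) [r [hr hp]]; exists r; split=> // x a hx; apply: hp => //.
  by rewrite mem_enum.
elim=> [|a s [r [hr hp]]].
  have [x [hx lx]] := attain _ _ nt ft; by exists x; split.
have [[x [hx xa]]|nex] := pselect (exists x, Op t x /\ 0 < x a).
  exists (fun a => 1/2 * r a + 1/2 * x a); split; first exact: Op_mid.
  move=> a'; rewrite inE => /orP [/eqP -> | ha] x' hx' hpos.
    case: hr => [[_ rn] _]; have := rn a; lra.
  have := hp a' ha x' hx' hpos; case: hx => [[_ xn] _]; have := xn a'; lra.
exists r; split=> // a'; rewrite inE => /orP [/eqP -> | ha] x' hx' hpos.
  by exfalso; apply: nex; exists x'.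
exact: (hp a' ha x' hx' hpos).
Qed.

Lemma support t r x : nonneg t -> f t = (fine (f t))%:E ->
  Op t r -> X x -> (forall a, r a = 0 -> x a = 0) -> Op t x.
Proof.
move=> nt ft [hr lr] hx hz.
have [e [e0 he]] : exists e, 0 < e /\ forall a, e * x a <= r a.
  suff : forall s : seq A, exists e, 0 < e /\ forall a, a \in s -> e * x a <= r a.
    by move=> /(_ (enum A)) [e [e0 he]]; exists e; split=> // a; apply: he; rewrite mem_enum.
  elim=> [|a s [e [e0 he]]]; first by exists 1; split.
  have rn : 0 <= r a by case: hr => _ h; apply: h.
  have xn : 0 <= x a by case: hx => _ h; apply: h.
  have [ea [ea0 hea]] : exists ea, 0 < ea /\ ea * x a <= r a.
    have [x0|xp] := eqVneq (x a) 0; first by exists 1; rewrite x0 mulr0; split.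
    have rp : 0 < r a.
      rewrite lt_neqAle rn andbT eq_sym; apply/eqP => r0; by move: xp; rewrite hz // eqxx.
    have xp' : 0 < x a by rewrite lt_neqAle eq_sym xp xn.
    exists (r a / x a); split; first by rewrite divr_gt0.
    by rewrite divfK // gt_eqF.
  exists (Num.min e ea); split; first by rewrite lt_min e0 ea0.
  move=> a'; rewrite inE => /orP [/eqP -> | ha].
    apply: le_trans hea; apply: ler_wpM2r => //; by rewrite ge_min lexx orbT.
  have xn' : 0 <= x a' by case: hx => _ h; apply: h.
  apply: le_trans (he a' ha); apply: ler_wpM2r => //; by rewrite ge_min lexx.
split=> //.
have hy : X (fun a => (1 + e) * r a + (- e) * x a).
  apply: flow_aff => //; first by ring.
  move=> a; have := he a; have rn : 0 <= r a by case: hr => _ h; apply: h.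
  have : 0 <= e * r a by rewrite mulr_ge0 // ltW.
  have : (1 + e) * r a = r a + e * r a by ring.
  have : - e * x a = - (e * x a) by ring.
  lra.
have := fF1 _ _ nt hy; rewrite ft lee_fin ell_comb => hly.
set phi := fine (f t) in lr hly *.
have h1 : (1 + e) * ell r t <= (1 + e) * phi by rewrite ler_wpM2l // addr_ge0 // ltW.
have : e * ell x t <= e * phi.
  have : (1 + e) * phi = phi + e * phi by ring.
  have : - e * ell x t = - (e * ell x t) by ring.
  lra.
by rewrite ler_pM2l.
Qed.

Lemma Op_midincl s t x : proj_set F s -> proj_set F t ->
  Op ((1/2) *: s + (1 - 1/2) *: t) x -> Op s x /\ Op t x.
Proof.
move=> Ts Tt [hx lx].
have [ps [fs Fs ns]] := Tinfo _ Ts; have [pt [ft Ft nt]] := Tinfo _ Tt.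
have [_ fm] := Tmid _ _ _ _ Fs Ft fs ft.
move: lx; rewrite fm /= ell_linl => lm.
have := fF1 _ _ ns hx; have := fF1 _ _ nt hx; rewrite fs ft !lee_fin /ell => h1 h2.
rewrite /Op fs ft /=; split; split=> //; rewrite /ell; lra.
Qed.

Lemma common : (exists t, proj_set F t) -> exists x, X x /\ forall t, proj_set F t -> Op t x.
Proof.
move=> [t0 T0].
pose supp (t : vec) : {set A} := ([set a | `[< exists x, Op t x /\ 0 < x a >]])%SET.
have Ti t : proj_set F t -> nonneg t /\ f t = (fine (f t))%:E.
  by move=> Tt; have [p [ft _ nt]] := Tinfo _ Tt; rewrite ft.
pose P n := `[< exists t, proj_set F t /\ #|supp t| = n >].
have exP : exists n, P n by exists #|supp t0|; apply/asboolP; exists t0.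
case: (ex_minnP exP) => n /asboolP [s [Ts hs]] hmin.
have [ns fs] := Ti s Ts.
have [r [hr hrp]] := relint s ns fs.
exists r; split; first by case: hr.
move=> t Tt.
have [ps [fs' Fs _]] := Tinfo _ Ts; have [pt [ft Ft _]] := Tinfo _ Tt.
have [Fm fm] := Tmid _ _ _ _ Fs Ft fs' ft.
set m := (1/2) *: s + (1 - 1/2) *: t in Fm fm *.
have Tm : proj_set F m by exists (- ((ps + pt) / 2)).
have [nm fm'] := Ti m Tm.
have sub : supp m \subset supp s.
  apply/fintype.subsetP => a; rewrite !inE => -[x [hx xa]]; exists x; split=> //.
  by have [] := Op_midincl _ _ _ Ts Tt hx.
have eqs : supp m = supp s.
  apply/eqP; rewrite eqEcard sub /= hs; apply: hmin; apply/asboolP; by exists m.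
have [rm [hrm hrmp]] := relint m nm fm'.
have : Op m r.
  apply: (support _ rm r nm fm' hrm); first by case: hr.
  move=> a rma; apply: contrapT => ra.
  have rpos : 0 < r a.
    by case: hr => [[_ rn] _]; rewrite lt_neqAle eq_sym (rn a) andbT; apply/eqP.
  have : a \in supp m by rewrite eqs inE; apply/asboolP; exists r; split.
  rewrite inE => /asboolP [x [hx xa]]; have := hrmp x a hx xa; by rewrite rma ltxx.
by move=> hm; have [] := Op_midincl _ _ _ Ts Tt hm.
Qed.

Lemma epi_low p t phi : epi_g tl hd c o d p -> f t = phi%:E -> phi <= p.2 + dotv t p.1.
Proof.
move=> ep ft; have := le_trans (gG1 t p.1) ep; rewrite ft -EFinB lee_fin; lra.
Qed.

Lemma fin_between (y : \bar R) a b : (a%:E <= y)%E -> (y <= b%:E)%E -> y = (fine y)%:E.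
Proof. by case: y. Qed.

Lemma g_upper (w : vec) x : X x -> (forall i, restr A1 x i 0 <= w i 0) -> (g w <= (costc c x)%:E)%E.
Proof.
move=> hx hr; apply: gG2 => t'.
have [nt|nt] := pselect (nonneg t'); last by rewrite fF3 //= leNye.
have h1 := fF1 _ _ nt hx; have h2 := dotv_le _ _ _ nt hr.
apply: le_trans (leeB h1 (lexx (dotv t' w)%:E)) _.
by rewrite -EFinB lee_fin /ell; lra.
Qed.

Lemma main_face : (exists p, F p) -> reaction_set tl hd c o d (WofSet tl hd c o d (proj_set F)).
Proof.
move=> [[t0 z0] F0]; have T0 : proj_set F t0 by exists z0.
have [p0 [f0 _ n0]] := Tinfo _ T0.
pose G := [set p : vec * R | epi_g tl hd c o d p /\
  forall t, proj_set F t -> ((p.2 + dotv t p.1)%:E <= f t)%E].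
have Gface : is_face (epi_g tl hd c o d) G.
  split.
  - by move=> p [].
  - move=> [p1 p2] [q1 q2] l [ep hp] [eq hq] /andP [l0 l1]; split.
      apply: gG2 => t'; rewrite /= dotv_linr.
      case E: (f t') => [r| |] //.
      + have h1 := epi_low _ _ _ ep E; have h2 := epi_low _ _ _ eq E; rewrite /= in h1 h2.
        rewrite -EFinB lee_fin.
        have : l * r <= l * (p2 + dotv t' p1) by rewrite ler_wpM2l.
        have : (1 - l) * r <= (1 - l) * (q2 + dotv t' q1) by rewrite ler_wpM2l // subr_ge0.
        have : l * (p2 + dotv t' p1) = l * p2 + l * dotv t' p1 by ring.
        have : (1 - l) * (q2 + dotv t' q1) = (1 - l) * q2 + (1 - l) * dotv t' q1 by ring.
        have : l * r + (1 - l) * r = r by ring.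
        lra.
      + by have := le_trans (gG1 t' p1) ep; rewrite E.
      + by rewrite addNye leNye.
    move=> t Tt; have [ph [ft _ _]] := Tinfo _ Tt.
    have := hp t Tt; have := hq t Tt; rewrite ft /= !lee_fin dotv_linr => h2 h1.
    have : l * (p2 + dotv t p1) <= l * ph by rewrite ler_wpM2l.
    have : (1 - l) * (q2 + dotv t q1) <= (1 - l) * ph by rewrite ler_wpM2l // subr_ge0.
    have : l * (p2 + dotv t p1) = l * p2 + l * dotv t p1 by ring.
    have : (1 - l) * (q2 + dotv t q1) = (1 - l) * q2 + (1 - l) * dotv t q1 by ring.
    have : l * ph + (1 - l) * ph = ph by ring.
    lra.
  - move=> [p1 p2] [q1 q2] l ep eq /andP [l0 l1] [_ hm].
    have key : forall t, proj_set F t -> ((p2 + dotv t p1)%:E <= f t)%E /\ ((q2 + dotv t q1)%:E <= f t)%E.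
      move=> t Tt; have [ph [ft _ _]] := Tinfo _ Tt.
      have h1 := epi_low _ _ _ ep ft; have h2 := epi_low _ _ _ eq ft; rewrite /= in h1 h2.
      have := hm t Tt; rewrite ft /= !lee_fin dotv_linr => h3.
      have e1 : l * (p2 + dotv t p1) = l * p2 + l * dotv t p1 by ring.
      have e2 : (1 - l) * (q2 + dotv t q1) = (1 - l) * q2 + (1 - l) * dotv t q1 by ring.
      have e3 : l * ph + (1 - l) * ph = ph by ring.
      have a1 : l * ph <= l * (p2 + dotv t p1) by rewrite ler_wpM2l // ltW.
      have a2 : (1 - l) * ph <= (1 - l) * (q2 + dotv t q1) by rewrite ler_wpM2l // subr_ge0 ltW.
      split.
        have : l * (p2 + dotv t p1) <= l * ph by lra.
        by rewrite ler_pM2l // => h; rewrite lee_fin.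
      have : (1 - l) * (q2 + dotv t q1) <= (1 - l) * ph by lra.
      by rewrite ler_pM2l ?subr_gt0 // => h; rewrite lee_fin.
    by split; split=> // t Tt; have [] := key t Tt.
have Gnv : nonvertical G.
  move=> [k [p [lam [hp s0 s1 s2]]]].
  have eq i : (p i).2 = p0 - dotv t0 (p i).1.
    have [ep hg] := hp i; have h1 := epi_low _ _ _ ep f0.
    have := hg t0 T0; rewrite f0 lee_fin; lra.
  move: s2; rewrite (eq_bigr (fun i => lam i * p0 - lam i * dotv t0 (p i).1)); last first.
    by move=> i _; rewrite eq mulrBr.
  rewrite sumrB -mulr_suml s0 mul0r -dotv_sumr s1 dotv0r subr0 => /esym /eqP.
  by rewrite oner_eq0.
have [xs [hxs hop]] := common (ex_intro _ t0 T0).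
exists G; split=> //.
  exists (restr A1 xs, costc c xs); split.
    apply: g_upper => // i; exact: lexx.
  move=> t Tt; have [ph [ft _ nt]] := Tinfo _ Tt; have [_ lo] := hop t Tt.
  by rewrite ft /= lee_fin; move: lo; rewrite ft /= /ell.
apply/seteqP; split; last first.
  move=> w [z [ep hg]] t Tt; have [ph [ft _ nt]] := Tinfo _ Tt.
  apply: (@H1 t ph w z nt ft).
    by move=> t'; apply: le_trans (gG1 t' w) ep.
  by have := hg t Tt; rewrite ft /= lee_fin.
move=> w hW.
have [x0 [hx0 nw hr0 hc0]] := Wof_elim _ _ _ n0 f0 (hW t0 T0).
have gup := g_upper _ _ hx0 hr0.
have glo : ((p0 - dotv t0 w)%:E <= g w)%E by rewrite EFinB -f0; exact: gG1.
have gf := fin_between _ _ _ glo gup.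
exists (fine (g w)); split; first by rewrite /epi_g /= -gf.
move=> t Tt /=; have [ph [ft _ nt]] := Tinfo _ Tt.
have [x [hx _ hr hc]] := Wof_elim _ _ _ nt ft (hW t Tt).
have := g_upper _ _ hx hr; rewrite gf ft !lee_fin; lra.
Qed.

End Flow.

Theorem proposition2 (R : realType) (V A : finType) (tl hd : A -> V)
    (c : A -> R) (A1 : {set A}) (o d : V) (T : set 'cV[R]_#|A1|) :
  (forall a, 0 <= c a) ->
  (0 < #|A1|)%N -> (#|A1| < #|A|)%N ->
  o != d ->
  connect (untolled_rel tl hd A1) o d ->
  action_set tl hd c o d T ->
  reaction_set tl hd c o d (WofSet tl hd c o d T).
Proof.
move=> c0 _ _ _ _ [F [Fface Fne Fnv ->]].
exact: (@main_face R V A tl hd c A1 o d c0 F Fface Fnv Fne).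
Qed.
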